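(* Let $k$ be a number field and let $u_1,u_2,u_3\in k$ be such that $0,u_1,u_2,u_3$ are pairwise distinct. Then there are infinitely many general Huff curves $$G_{a,b}:\ x(ay^2-1)=y(bx^2-1),\qquad a,b\in k,\ ab(a-b)\neq0,$$ such that each of $0,u_1,u_2,u_3$ is the $x$-coordinate of a point of $G_{a,b}(k)$. *)

(* Defs.v *)
From HB Require Import structures.
From mathcomp Require Import all_boot all_order all_algebra all_field.
Set Implicit Arguments. Unset Strict Implicit. Unset Printing Implicit Defensive.
Import GRing.Theory Num.Theory.
Local Open Scope ring_scope.

(* A number field is modelled as a finite-dimensional field extension of Q:
   k : fieldExtType rat. *)

Definition on_huff (k : fieldType) (a b x y : k) : Prop :=
  x * (a * y ^+ 2 - 1) = y * (b * x ^+ 2 - 1).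

Definition huff_xcoord (k : fieldType) (a b x : k) : Prop :=
  exists y : k, on_huff a b x y.

Definition huff_params (k : fieldType) (a b : k) : Prop :=
  a * b * (a - b) != 0.

(* Main.v *)
Require Import Defs.
From HB Require Import structures.
From mathcomp Require Import all_boot all_order all_algebra all_field.
From mathcomp Require Import ring.
Import GRing.Theory Num.Theory.
Local Open Scope ring_scope.

Section Aux.
Variable k : fieldExtType rat.

Lemma natk_inj : injective (fun n : nat => (n%:R : k)).
Proof.
move=> m n /= H.
have : in_alg k (m%:R) = in_alg k (n%:R) by rewrite !rmorph_nat.
move/fmorph_inj/eqP; rewrite Num.Theory.eqr_nat => /eqP //.
Qed.

Lemma natk_neq0 n : (n.+1%:R : k) != 0.
Proof. apply/eqP=> H; have := @natk_inj n.+1 0 H; by []. Qed.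

Lemma pt (a b u R : k) : u != 0 -> a != 0 ->
  R ^+ 2 = (b * u - u^-1) ^+ 2 + 4 * a ->
  on_huff a b u ((b * u - u^-1 + R) / (2 * a)).
Proof.
move=> hu ha hR; rewrite /on_huff; apply/eqP; rewrite -subr_eq0; apply/eqP.
have h2 : (2 : k) != 0 by exact: (natk_neq0 1).
have h4 : (4 : k) != 0 by exact: (natk_neq0 3).
transitivity (u * (R ^+ 2 - (b * u - u^-1) ^+ 2 - 4 * a) / (4 * a)).
  by field; rewrite ha h4 hu h2.
by rewrite hR; ring.
Qed.

Lemma exists_nonroot (p : {poly k}) : p != 0 -> exists n : nat, ~~ root p n%:R.
Proof.
move=> p0; have [/hasP [n _ hn]|/hasPn H] := boolP (has (fun n : nat => ~~ root p n%:R) (iota 0 (size p))).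
  by exists n.
exfalso.
have := max_poly_roots p0 (rs := [seq (n%:R : k) | n <- iota 0 (size p)]).
rewrite size_map size_iota ltnn.
move=> HH; suff: false by []; apply: HH.
  by apply/allP => x /mapP [n hn ->]; have := H n hn; rewrite negbK.
by rewrite map_inj_uniq ?iota_uniq //; exact: natk_inj.
Qed.

Definition Fp (d w : k) : {poly k} :=
  'X^4 + (-(2 * d + 4 * w))%:P * 'X^2 + (d ^+ 2)%:P.

Lemma Fp_neq0 d w : Fp d w != 0.
Proof.
apply/eqP => H; have := congr1 (fun p : {poly k} => p`_4) H.
rewrite /Fp !coefE /=.
rewrite mulr0 !addr0 => /eqP; by rewrite oner_eq0.
Qed.

Lemma Fp_eval (d w t : k) : t != 0 ->
  (Fp d w).[t] = 4 * t ^+ 2 * (((d / t - t) / 2) ^+ 2 - w).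
Proof.
move=> ht; have h2 : (2 : k) != 0 by exact: (natk_neq0 1).
transitivity (t^+4 + (-(2*d+4*w))*t^+2 + d^+2).
  by rewrite /Fp !hornerE expr2.
field; by rewrite ht h2.
Qed.

End Aux.

Theorem theorem4 (k : fieldExtType rat) (u1 u2 u3 : k) :
  uniq [:: 0; u1; u2; u3] ->
  forall s : seq (k * k), exists a b : k,
    (a, b) \notin s /\ huff_params a b /\
    (forall x, x \in [:: 0; u1; u2; u3] -> huff_xcoord a b x).
Proof.
move=> Hu s.
move: Hu; rewrite /= !inE !negb_or => /and4P [/and3P [h01 h02 h03] /andP [h12 h13] h23 _].
have hu1 : u1 != 0 by rewrite eq_sym.
have hu2 : u2 != 0 by rewrite eq_sym.
have hu3 : u3 != 0 by rewrite eq_sym.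
have h2 : (2 : k) != 0 by exact: (@natk_neq0 k 1).
have h4 : (4 : k) != 0 by exact: (@natk_neq0 k 3).
pose b := -(u1 * u2)^-1.
pose c := b * u1 - u1^-1.
pose c3 := b * u3 - u3^-1.
pose d := c3 ^+ 2 - c ^+ 2.
pose W := [seq c ^+ 2 + 4 * v | v <- 0 :: b :: map fst s].
have pn : ('X * \prod_(w <- W) @Fp k d w) != 0.
  rewrite mulf_neq0 ?polyX_eq0 // prodf_seq_neq0; apply/allP => w _.
  exact: (@Fp_neq0 k).
have [n hn] := @exists_nonroot k _ pn.
pose t := (n%:R : k).
move: hn; rewrite /root hornerM hornerX mulf_eq0 negb_or => /andP [ht hprod].
rewrite horner_prod prodf_seq_neq0 in hprod.
pose P := (d / t - t) / 2.
pose a := (P ^+ 2 - c ^+ 2) / 4.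
have hPa : P ^+ 2 = (b * u1 - u1^-1) ^+ 2 + 4 * a.
  by rewrite /a /c; field; rewrite h4 hu1.
have hbad : forall v, v \in 0 :: b :: map fst s -> a != v.
  move=> v hv; apply/eqP => av.
  have := allP hprod (c ^+ 2 + 4 * v) (map_f _ hv).
  by rewrite implyTb (@Fp_eval k) // -av -hPa subrr mulr0 eqxx.
have hb0 : b != 0 by rewrite oppr_eq0 invr_eq0 mulf_neq0.
have ha0 : a != 0 by apply: hbad; rewrite inE eqxx.
exists a, b; split; [|split].
- apply/negP => hs; suff: a != a by rewrite eqxx.
  apply: hbad.
  rewrite !inE; apply/orP; right; apply/orP; right.
  by apply/mapP; exists (a, b).
- rewrite /huff_params; apply: mulf_neq0; first exact: mulf_neq0.
  rewrite subr_eq0; apply: hbad.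
  by rewrite !inE eqxx orbT.
- move=> x; rewrite !inE => /or4P [] /eqP ->.
  + by exists 0; rewrite /on_huff !mul0r.
  + by eexists; apply: (@pt k _ _ _ P).
  + have hc2 : b * u2 - u2^-1 = b * u1 - u1^-1 by rewrite /b; field; rewrite hu1 hu2.
    by eexists; apply: (@pt k _ _ _ P) => //; rewrite hc2.
  + pose Q := (d / t + t) / 2.
    have hQ : Q ^+ 2 = (b * u3 - u3^-1) ^+ 2 + 4 * a.
      have -> : 4 * a = P ^+ 2 - c ^+ 2 by rewrite hPa /c; ring.
      by rewrite /Q /P /d /c3; field; rewrite ht h2.
    by eexists; apply: (@pt k _ _ _ Q).
Qed.
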